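(* A number $t\in \frac{n+m}{2}+\mathbb Z$ is critical (i.e. $t\in\mathrm{Crit}$) if and only if $$|t-\kappa|<L+\tfrac12 \qquad (I)$$ and, in addition, in the exceptional case ($n\equiv m\equiv 1 \bmod 2$) $t$ satisfies the parity condition $$t-\kappa'\in (2\mathbb N-\epsilon)\cup -(2\mathbb N-1-\epsilon),$$ where $\epsilon\in\{0,1\}$, $\epsilon\equiv\delta+\delta' \bmod 2$, and $\mathbb N=\{1,2,3,\dots\}$.
   Context: Let $n,m\ge 1$ be integers, not both equal to $1$. For $N\ge1$ put $L_0^+(N):=\{(w,l)\in\mathbb Z\times\mathbb Z^N:\ l_1>l_2>\dots>l_N,\ l_i+l_{N+1-i}=0 \text{ for all } i,\ w+l_i\equiv N+1 \bmod 2 \text{ for all } i\}$. Fix $(w,l)\in L_0^+(n)$, $(w',l')\in L_0^+(m)$ and $\delta,\delta'\in\{0,1\}$ (the Langlands parameters of archimedean components $\pi_\infty\cong J(-w,l)\otimes \mathrm{sgn}^\delta$, $\sigma_\infty\cong J(-w',l')\otimes\mathrm{sgn}^{\delta'}$ of cohomological cuspidal representations of $GL_n$, $GL_m$ over $\mathbb Q$). Representations of the Weil group $W_{\mathbb R}$ (Knapp's notation): for an integer $l\ge1$ and $t\in\mathbb C$, $(l,t)$ is the irreducible 2-dimensional representation, and for $\epsilon\in\{0,1\}$, $(\mathrm{sgn}^\epsilon,t)$ is the 1-dimensional one; $(0,t):=(\mathrm{sgn}^0,t)\oplus(\mathrm{sgn}^1,t)$. Their $L$-factors are $L(s,(l,t))=\Gamma_{\mathbb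 C}(s+t+\frac l2)$, $L(s,(\mathrm{sgn}^\epsilon,t))=\Gamma_{\mathbb R}(s+t+\epsilon)$, multiplicative in direct sums, where $\Gamma_{\mathbb R}(s)=\pi^{-s/2}\Gamma(s/2)$, $\Gamma_{\mathbb C}(s)=2(2\pi)^{-s}\Gamma(s)$. The contragredient of $(l,t)$ is $(l,-t)$ and that of $(\mathrm{sgn}^\epsilon,t)$ is $(\mathrm{sgn}^\epsilon,-t)$. Put $\pi^W:=\bigoplus_{i=1}^{\lfloor n/2\rfloor}(l_i,-w/2)$, plus the summand $(\mathrm{sgn}^\delta,-w/2)$ if $n$ is odd; define $\sigma^W$ analogously from $(w',l',\delta',m)$; and $\tau:=\pi^W\otimes\sigma^W$. A number $t\in\frac{n+m}{2}+\mathbb Z$ is called critical if neither $s\mapsto L(s,\tau)$ nor $s\mapsto L(1-s,\check\tau)$ has a pole at $s=t$; $\mathrm{Crit}$ denotes the set of critical numbers. Put $\kappa:=\frac12(w+w'+1)$, $\kappa':=\kappa-\frac12$. The exceptional case is $n\equiv m\equiv1\bmod 2$. Let $L_0:=\min\{|l_i-l'_j|:1\le i\le n,1\le j\le m,\ i\ne\frac{n+1}{2}\text{ or } j\ne \frac{m+1}{2}\}$ and $L:=L_0/2$. *)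

(* Defs.v *)
(* All half-integers are handled as rationals (rat). *)
From HB Require Import structures.
From mathcomp Require Import all_boot all_order all_algebra.
Set Implicit Arguments. Unset Strict Implicit. Unset Printing Implicit Defensive.
Import Order.TTheory GRing.Theory Num.Theory.
Local Open Scope ring_scope.

(* (w,l) in L_0^+(N).  The sequence l_1,...,l_N is encoded by l : nat -> int
   with  l i = l_{i+1}  (0-based indexing); values of l at i >= N are irrelevant. *)
Definition L0plus (N : nat) (w : int) (l : nat -> int) : Prop :=
  (forall i : nat, (i.+1 < N)%N -> l i.+1 < l i) /\
  (forall i : nat, (i < N)%N -> l i + l (N.-1 - i)%N = 0) /\
  (forall i : nat, (i < N)%N -> (w + l i = (N.+1)%:Z %[mod 2])%Z).

(* Irreducible representations of the Weil group W_R (Knapp's notation):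
   WTwo l t  is (l,t) (meaningful for l >= 1),
   WOne e t  is (sgn^e,t).
   A (finite-dimensional semisimple) representation is a list of irreducibles
   (direct sum). *)
Inductive WRep := WTwo of nat & rat | WOne of bool & rat.

(* (l,t) as a representation, with the convention (0,t) := (sgn^0,t)+(sgn^1,t) *)
Definition Wtwo (l : nat) (t : rat) : seq WRep :=
  if l == 0%N then [:: WOne false t; WOne true t] else [:: WTwo l t].

(* Tensor products of irreducibles (Knapp's rules). *)
Definition Wtens1 (a b : WRep) : seq WRep :=
  match a, b with
  | WTwo l t, WTwo l' t' => Wtwo (l + l') (t + t') ++ Wtwo (if (l <= l')%N then l' - l else l - l')%N (t + t')
  | WTwo l t, WOne _ t' => [:: WTwo l (t + t')]
  | WOne _ t, WTwo l' t' => [:: WTwo l' (t + t')]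
  | WOne e t, WOne e' t' => [:: WOne (addb e e') (t + t')]
  end.

Definition Wtens (r1 r2 : seq WRep) : seq WRep :=
  flatten [seq Wtens1 a b | a <- r1, b <- r2].

Definition Wcontra1 (a : WRep) : WRep :=
  match a with WTwo l t => WTwo l (- t) | WOne e t => WOne e (- t) end.
Definition Wcontra (r : seq WRep) : seq WRep := map Wcontra1 r.

(* Poles of Gamma_C(x) = 2(2pi)^{-x} Gamma(x): x in {0,-1,-2,...};
   poles of Gamma_R(x) = pi^{-x/2} Gamma(x/2): x in {0,-2,-4,...}. *)
Definition GammaC_pole (x : rat) : bool := (x \is a Num.int) && (x <= 0).
Definition GammaR_pole (x : rat) : bool := GammaC_pole (x / 2).

(* s is a pole of the L-factor of an irreducible:
   L(s,(l,t)) = Gamma_C(s+t+l/2), L(s,(sgn^e,t)) = Gamma_R(s+t+e). *)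
Definition Lpole1 (a : WRep) (s : rat) : bool :=
  match a with
  | WTwo l t => GammaC_pole (s + t + l%:R / 2)
  | WOne e t => GammaR_pole (s + t + (e : nat)%:R)
  end.

(* L(s,rho) is the product of the L-factors of the summands; since Gamma has
   no zeros, it has a pole at s iff some factor does. *)
Definition Lpole (r : seq WRep) (s : rat) : bool := has (fun a => Lpole1 a s) r.

Definition piW (N : nat) (w : int) (l : nat -> int) (delta : bool) : seq WRep :=
  [seq WTwo (absz (l i)) (- (w%:~R : rat) / 2) | i <- iota 0 N./2]
  ++ (if odd N then [:: WOne delta (- (w%:~R : rat) / 2)] else [::]).

Definition tau (n m : nat) (w w' : int) (l l' : nat -> int) (d d' : bool) :=
  Wtens (piW n w l d) (piW m w' l' d').

Definition critical (n m : nat) (w w' : int) (l l' : nat -> int) (d d' : bool)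
  (t : rat) : bool :=
  ~~ Lpole (tau n m w w' l l' d d') t && ~~ Lpole (Wcontra (tau n m w w' l l' d d')) (1 - t).

(* Admissible index pairs (0-based): i < n, j < m, not both the middle indices
   (1-based: i = (n+1)/2 and j = (m+1)/2, which only exist for n, m odd). *)
Definition adm_pair (n m : nat) (i j : nat) : bool :=
  [&& (i < n)%N, (j < m)%N & ~~ [&& odd n, odd m, i == n./2 & j == m./2]].

Definition is_L0 (n m : nat) (l l' : nat -> int) (L0 : nat) : Prop :=
  (exists i j, adm_pair n m i j /\ L0 = absz (l i - l' j)) /\
  (forall i j, adm_pair n m i j -> (L0 <= absz (l i - l' j))%N).

Definition kappa (w w' : int) : rat := ((w + w' + 1)%:~R) / 2.
Definition kappa' (w w' : int) : rat := kappa w w' - 1 / 2.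

(* Main.v *)
Require Import Defs.
From HB Require Import structures.
From mathcomp Require Import all_boot all_order all_algebra.
From mathcomp Require Import zify ring lra.
Import Order.TTheory GRing.Theory Num.Theory.
Local Open Scope ring_scope.

Lemma intdiv_rat (z d : int) : d != 0 ->
  ((z%:~R / d%:~R : rat) \is a Num.int) = (d %| z)%Z.
Proof.
move=> dn0; apply/idP/idP; last exact: Qint_dvdz.
move/intrP=> [k hk].
have : (z%:~R : rat) = (k * d)%:~R.
  rewrite intrM -hk mulfVK //. by rewrite intr_eq0.
move/eqP; rewrite eqr_int => /eqP ->. apply: dvdz_mull. exact: dvdzz.
Qed.

Lemma GC_half (z : int) : GammaC_pole (z%:~R / 2) = (2 %| z)%Z && (z <= 0).
Proof.
rewrite /GammaC_pole.
have -> : (2 : rat) = (2 : int)%:~R by [].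
rewrite intdiv_rat //. congr (_ && _).
by rewrite pmulr_lle0 ?lerz0 // invr_gt0 ltr0z. Qed.
Lemma GC_quart (z : int) : GammaC_pole (z%:~R / 2 / 2) = (4 %| z)%Z && (z <= 0).
Proof.
rewrite /GammaC_pole.
have -> : (z%:~R / 2 / 2 : rat) = z%:~R / (4 : int)%:~R.
  rewrite -mulrA -invfM. congr (_ / _).
rewrite intdiv_rat //. congr (_ && _).
by by rewrite pmulr_lle0 ?lerz0 // invr_gt0 ltr0z.
Qed.
Lemma natz_rat (k : nat) : ((k%:Z)%:~R : rat) = k%:R.
Proof. by rewrite pmulrn. Qed.

Lemma pole2 (Y : int) (L : nat) (tt c0 : rat) : tt + c0 = Y%:~R / 2 ->
  Lpole1 (WTwo L c0) tt = (2 %| Y + L%:Z)%Z && (Y + L%:Z <= 0).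
Proof.
move=> h /=. rewrite -GC_half. congr GammaC_pole.
by rewrite intrD natz_rat mulrDl -h.
Qed.

Lemma pole2c (Y : int) (L : nat) (tt c0 : rat) : tt + c0 = Y%:~R / 2 ->
  Lpole1 (Wcontra1 (WTwo L c0)) (1 - tt) = (2 %| 2 - Y + L%:Z)%Z && (2 - Y + L%:Z <= 0).
Proof.
move=> h /=. rewrite -GC_half. congr GammaC_pole.
have -> : 1 - tt + - c0 = 1 - (tt + c0) by ring.
by rewrite h !intrD intrN !natz_rat; field.
Qed.

Lemma pole1 (Y : int) (e : bool) (tt c0 : rat) : tt + c0 = Y%:~R / 2 ->
  Lpole1 (WOne e c0) tt = (4 %| Y + 2 * (e : nat)%:Z)%Z && (Y + 2 * (e : nat)%:Z <= 0).
Proof.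
move=> h /=. rewrite /GammaR_pole -GC_quart. congr GammaC_pole.
by rewrite h !intrD intrM !natz_rat; field.
Qed.

Lemma pole1c (Y : int) (e : bool) (tt c0 : rat) : tt + c0 = Y%:~R / 2 ->
  Lpole1 (Wcontra1 (WOne e c0)) (1 - tt) = (4 %| 2 - Y + 2 * (e : nat)%:Z)%Z && (2 - Y + 2 * (e : nat)%:Z <= 0).
Proof.
move=> h /=. rewrite /GammaR_pole -GC_quart. congr GammaC_pole.
have -> : 1 - tt + - c0 = 1 - (tt + c0) by ring.
by rewrite h !intrD intrN intrM !natz_rat; field.
Qed.
Definition good (tt : rat) (a : WRep) : bool :=
  ~~ Lpole1 a tt && ~~ Lpole1 (Wcontra1 a) (1 - tt).

Lemma good2 (Y : int) (L : nat) (tt c0 : rat) : tt + c0 = Y%:~R / 2 ->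
  (2 %| Y + L%:Z)%Z -> all (good tt) (Wtwo L c0) = (`|Y - 1| < L%:Z + 1).
Proof.
move=> h hp; rewrite /Wtwo; case: eqP => [L0|_] /=.
- rewrite /good !(pole1 _ _ _ _ h) !(pole1c _ _ _ _ h) /=. subst L. lia.
- rewrite andbT /good (pole2 _ _ _ _ h) (pole2c _ _ _ _ h). lia.
Qed.

Lemma good1 (Y : int) (e : bool) (tt c0 : rat) : tt + c0 = Y%:~R / 2 ->
  good tt (WOne e c0) = ~~ ((4 %| Y + 2 * (e : nat)%:Z)%Z && (Y + 2 * (e : nat)%:Z <= 0))
     && ~~ ((4 %| 2 - Y + 2 * (e : nat)%:Z)%Z && (2 - Y + 2 * (e : nat)%:Z <= 0)).
Proof. by move=> h; rewrite /good (pole1 _ _ _ _ h) (pole1c _ _ _ _ h). Qed.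

Lemma all_Wtens P A B : all P (Wtens A B) = all (fun a => all (fun b => all P (Wtens1 a b)) B) A.
Proof.
elim: A => //= a A IH. rewrite -IH /Wtens /= flatten_cat all_cat. congr (_ && _).
clear IH; elim: B => //= b B IHB. by rewrite all_cat IHB.
Qed.

Lemma critical_all n m w w' l l' d d' t :
  critical n m w w' l l' d d' t = all (good t) (tau n m w w' l l' d d').
Proof.
rewrite /critical /Lpole /Wcontra has_map -!all_predC -all_predI.
by apply: eq_all => a.
Qed.
Set Implicit Arguments. Unset Strict Implicit.
Lemma L0_dec N w l : L0plus N w l -> forall a b, (a < b)%N -> (b < N)%N -> l b < l a.
Proof.
move=> [hd _] a b ab bN.
have [d hb] : exists d, b = (a + d.+1)%N by exists (b - a.+1)%N; lia.
subst b; clear ab.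
move: bN; elim: d => [|d IH] bN.
- rewrite addn1; apply: hd; lia.
- apply: lt_trans (IH _); last lia.
  have -> : (a + d.+2 = (a + d.+1).+1)%N by lia.
  apply: hd; lia.
Qed.

Lemma L0_sym N w l i : L0plus N w l -> (i < N)%N -> l i = - l (N.-1 - i)%N.
Proof. move=> [_ [hs _]] iN; have := hs i iN; lia. Qed.

Lemma L0_pos N w l i : L0plus N w l -> (i < N./2)%N -> 0 < l i.
Proof.
move=> hL iN.
have h1 : l (N.-1 - i)%N < l i.
  by apply: (@L0_dec _ _ _ hL i (N.-1 - i)) => //; lia.
have := L0_sym hL (_ : (i < N)%N). lia.
Qed.

Lemma L0_mid N w l : L0plus N w l -> odd N -> l N./2 = 0.
Proof.
move=> hL hN. have := L0_sym hL (_ : (N./2 < N)%N).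
have -> : (N.-1 - N./2 = N./2)%N by lia. lia.
Qed.

Lemma L0_mirror N w l i : L0plus N w l -> (i < N)%N ->
  (exists2 j, (j < N./2)%N & `|l i| = `|l j|) \/ (odd N /\ i = N./2 /\ l i = 0).
Proof.
move=> hL iN.
case: (ltnP i N./2) => h1; first by left; exists i.
case: (ltnP (N.-1 - i) N./2) => h2.
  left; exists (N.-1 - i)%N => //. rewrite (L0_sym hL iN); lia.
right. have hi : i = N./2 by lia. have ho : odd N by lia.
split => //; split => //. by rewrite hi (L0_mid hL ho).
Qed.

Lemma L0_par N w l i : L0plus N w l -> (i < N)%N -> (2 %| w + l i - N%:Z - 1)%Z.
Proof. move=> [_ [_ hp]] iN; have := hp i iN; lia. Qed.

Lemma goodT (Y : int) (L : nat) (tt c0 : rat) : tt + c0 = Y%:~R / 2 ->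
  (2 %| Y + L%:Z)%Z -> good tt (WTwo L c0) = (`|Y - 1| < L%:Z + 1).
Proof. move=> h hp; rewrite /good (pole2 _ _ _ _ h) (pole2c _ _ _ _ h); lia. Qed.

Lemma goodTT (Y : int) (p q : nat) (tt c1 c2 : rat) : tt + (c1 + c2) = Y%:~R / 2 ->
  (2 %| Y + p%:Z + q%:Z)%Z -> all (good tt) (Wtens1 (WTwo p c1) (WTwo q c2)) =
  (`|Y - 1| < (p + q)%N%:Z + 1) && (`|Y - 1| < (absz (p%:Z - q%:Z))%:Z + 1).
Proof.
move=> h hp /=.
have -> : (if (p <= q)%N then q - p else p - q)%N = absz (p%:Z - q%:Z) by case: leqP; lia.
rewrite all_cat !(good2 _ _ _ _ h) //; lia.
Qed.

Lemma goodTO (Y : int) (p : nat) (e : bool) (tt c1 c2 : rat) : tt + (c1 + c2) = Y%:~R / 2 ->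
  (2 %| Y + p%:Z)%Z -> all (good tt) (Wtens1 (WTwo p c1) (WOne e c2)) = (`|Y - 1| < p%:Z + 1).
Proof. by move=> h hp /=; rewrite andbT (goodT h). Qed.

Lemma goodOT (Y : int) (p : nat) (e : bool) (tt c1 c2 : rat) : tt + (c1 + c2) = Y%:~R / 2 ->
  (2 %| Y + p%:Z)%Z -> all (good tt) (Wtens1 (WOne e c1) (WTwo p c2)) = (`|Y - 1| < p%:Z + 1).
Proof. by move=> h hp /=; rewrite andbT (goodT h). Qed.

Lemma goodOO (Y : int) (e e' : bool) (tt c1 c2 : rat) : tt + (c1 + c2) = Y%:~R / 2 ->
  all (good tt) (Wtens1 (WOne e c1) (WOne e' c2)) =
  ~~ ((4 %| Y + 2 * (addb e e' : nat)%:Z)%Z && (Y + 2 * (addb e e' : nat)%:Z <= 0))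
     && ~~ ((4 %| 2 - Y + 2 * (addb e e' : nat)%:Z)%Z && (2 - Y + 2 * (addb e e' : nat)%:Z <= 0)).
Proof. by move=> h /=; rewrite andbT (good1 _ _ _ _ h). Qed.

Lemma all_piW P N w l d : all P (piW N w l d) <->
  (forall i, (i < N./2)%N -> P (WTwo (absz (l i)) (- (w%:~R : rat) / 2))) /\
  (odd N -> P (WOne d (- (w%:~R : rat) / 2))).
Proof.
rewrite /piW all_cat all_map; split.
- move/andP=> [/allP h1 h2]; split.
  + move=> i hi; apply: (h1 i); rewrite mem_iota; lia.
  + by move=> o; rewrite o /= andbT in h2.
- move=> [h1 h2]; apply/andP; split.
  + apply/allP => i; rewrite mem_iota => hi; apply: h1; lia.
  + by case: (odd N) h2 => //= ->.
Qed.

Lemma half_eq (x y : int) : ((x%:~R / 2 : rat) = y%:~R) <-> x = 2 * y.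
Proof.
split => [h|->].
- have : (x%:~R : rat) = (2 * y)%:~R by rewrite intrM -h; field.
  by move/eqP; rewrite eqr_int => /eqP.
- by rewrite intrM; field.
Qed.

Lemma half_lt (x y : int) : ((x%:~R / 2 : rat) < y%:~R / 2) = (x < y).
Proof. by rewrite ltr_pM2r ?ltr_int // invr_gt0. Qed.

Lemma R1 (Y : int) (w w' : int) (L0 : nat) (t : rat) :
  t = (Y%:~R + w%:~R + w'%:~R) / 2 ->
  (`|t - kappa w w'| < L0%:R / 2 + 1 / 2) = (`|Y - 1| < L0%:Z + 1).
Proof.
move=> ->.
have -> : (Y%:~R + w%:~R + w'%:~R) / 2 - kappa w w' = (Y - 1)%:~R / 2.
  by rewrite /kappa !intrD intrN; field.
have -> : L0%:R / 2 + 1 / 2 = (L0%:Z + 1)%:~R / 2 :> rat.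
  by rewrite intrD natz_rat; field.
rewrite normrM normfV -intr_norm.
have -> : `|2 : rat| = 2 by rewrite ger0_norm.
exact: half_lt.
Qed.

Lemma R2 (Y : int) (w w' : int) (t : rat) (e : nat) :
  t = (Y%:~R + w%:~R + w'%:~R) / 2 -> (2 %| Y)%Z -> (e <= 1)%N ->
  (~~ ((4 %| Y + 2 * e%:Z)%Z && (Y + 2 * e%:Z <= 0)) &&
   ~~ ((4 %| 2 - Y + 2 * e%:Z)%Z && (2 - Y + 2 * e%:Z <= 0)))
  <-> exists k : nat, (0 < k)%N /\ (t - kappa' w w' = (2 * k)%:R - e%:R \/
                                  t - kappa' w w' = - ((2 * k)%:R - 1 - e%:R)).
Proof.
move=> -> hY he.
have -> : (Y%:~R + w%:~R + w'%:~R) / 2 - kappa' w w' = Y%:~R / 2.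
  by rewrite /kappa' /kappa !intrD; field.
have E1 : forall k : nat, (Y%:~R / 2 = (2 * k)%:R - e%:R :> rat) <-> Y = 2 * ((2 * k)%N%:Z - e%:Z).
  move=> k; rewrite -half_eq intrB !natz_rat. done.
have E2 : forall k : nat, (Y%:~R / 2 = - ((2 * k)%:R - 1 - e%:R) :> rat) <->
    Y = 2 * (- ((2 * k)%N%:Z - 1 - e%:Z)).
  move=> k; rewrite -half_eq intrN !intrB !natz_rat. reflexivity.
split.
- move=> hS. case/boolP: (4 %| Y + 2 * e%:Z)%Z => h4.
  + exists (absz ((Y + 2 * e%:Z) %/ 4)%Z); split; first lia.
    left; apply/E1; lia.
  + exists (absz ((2 - Y + 2 * e%:Z) %/ 4)%Z); split; first lia.
    right; apply/E2; lia.
- move=> [k [k0 [/E1 h|/E2 h]]]; lia.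
Qed.

Lemma A1 (Y a b a' b' : int) : `|a| = `|a'| -> `|b| = `|b'| ->
  `|Y - 1| < (absz ((absz a')%:Z - (absz b')%:Z))%:Z + 1 -> `|Y - 1| < (absz (a - b))%:Z + 1.
Proof. lia. Qed.
Lemma A2 (Y a a' b : int) : `|a| = `|a'| -> b = 0 ->
  `|Y - 1| < (absz a')%:Z + 1 -> `|Y - 1| < (absz (a - b))%:Z + 1.
Proof. lia. Qed.
Lemma A3 (Y a b b' : int) : a = 0 -> `|b| = `|b'| ->
  `|Y - 1| < (absz b')%:Z + 1 -> `|Y - 1| < (absz (a - b))%:Z + 1.
Proof. lia. Qed.
Lemma B1 (Y a b : int) : 0 < a -> 0 < b -> `|Y - 1| < (absz (a - b))%:Z + 1 ->
  `|Y - 1| < (absz a + absz b)%N%:Z + 1 /\ `|Y - 1| < (absz ((absz a)%:Z - (absz b)%:Z))%:Z + 1.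
Proof. lia. Qed.
Lemma B2 (Y a b : int) : b = 0 -> `|Y - 1| < (absz (a - b))%:Z + 1 -> `|Y - 1| < (absz a)%:Z + 1.
Proof. lia. Qed.
Lemma B3 (Y a b : int) : a = 0 -> `|Y - 1| < (absz (a - b))%:Z + 1 -> `|Y - 1| < (absz b)%:Z + 1.
Proof. lia. Qed.
Lemma B4 (Y x : int) (L0 : nat) : (L0 <= absz x)%N -> `|Y - 1| < L0%:Z + 1 ->
  `|Y - 1| < (absz x)%:Z + 1.
Proof. lia. Qed.
Lemma half_ltn n : (0 < n)%N -> (n./2 < n)%N.
Proof. lia. Qed.
Lemma Adm1 n m i j : (i < n./2)%N -> (j < m./2)%N -> adm_pair n m i j.
Proof. rewrite /adm_pair; lia. Qed.
Lemma Adm2 n m i : odd m -> (i < n./2)%N -> adm_pair n m i m./2.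
Proof. rewrite /adm_pair; lia. Qed.
Lemma Adm3 n m j : odd n -> (j < m./2)%N -> adm_pair n m n./2 j.
Proof. rewrite /adm_pair; lia. Qed.
Lemma Par (Y w w' k a b : int) (n m : nat) : odd n -> odd m ->
  (2 %| w + a - n%:Z - 1)%Z -> (2 %| w' + b - m%:Z - 1)%Z -> a = 0 -> b = 0 ->
  Y = (n + m)%N%:Z + 2 * k - w - w' -> (2 %| Y)%Z.
Proof. lia. Qed.

Unset Implicit Arguments.
Theorem proposition2p1 (n m : nat) (w w' : int) (l l' : nat -> int)
  (delta delta' : bool) (L0 : nat) (t : rat) :
  (0 < n)%N -> (0 < m)%N -> ~ (n = 1%N /\ m = 1%N) ->
  L0plus n w l -> L0plus m w' l' ->
  is_L0 n m l l' L0 ->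
  t - ((n + m)%:R / 2) \is a Num.int ->
  (critical n m w w' l l' delta delta' t <->
   (`|t - kappa w w'| < L0%:R / 2 + 1 / 2 /\
    (odd n && odd m ->
     let eps : nat := addb delta delta' in
     exists k : nat, (0 < k)%N /\
       (t - kappa' w w' = (2 * k)%:R - eps%:R \/
        t - kappa' w w' = - ((2 * k)%:R - 1 - eps%:R))))).
Proof.
move=> n0 m0 n11 hl hl' [[i0 [j0 [hadm0 hL0e]]] hLmin] /intrP [k hk].
have [Y [tY hY]] : exists Y : int,
    t = (Y%:~R + w%:~R + w'%:~R) / 2 /\ Y = (n + m)%N%:Z + 2 * k - w - w'.
  exists ((n + m)%N%:Z + 2 * k - w - w'); split => //.
  have -> : t = (n + m)%:R / 2 + k%:~R by rewrite -hk; ring.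
  by rewrite !intrD !intrN intrM !natz_rat; field.
have h0 : t + (- (w%:~R : rat) / 2 + - (w'%:~R : rat) / 2) = Y%:~R / 2.
  by rewrite tY; field.
have pl : forall i, (i < n)%N -> (2 %| w + l i - n%:Z - 1)%Z := fun i => L0_par hl.
have pl' : forall j, (j < m)%N -> (2 %| w' + l' j - m%:Z - 1)%Z := fun j => L0_par hl'.
have mid : odd n -> l n./2 = 0 := L0_mid hl.
have mid' : odd m -> l' m./2 = 0 := L0_mid hl'.
set e : nat := addb delta delta'.
set S := ~~ ((4 %| Y + 2 * e%:Z)%Z && (Y + 2 * e%:Z <= 0)) &&
   ~~ ((4 %| 2 - Y + 2 * e%:Z)%Z && (2 - Y + 2 * e%:Z <= 0)).
have CE : critical n m w w' l l' delta delta' t <->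
  [/\ forall i j, (i < n./2)%N -> (j < m./2)%N ->
        `|Y - 1| < (absz (l i) + absz (l' j))%N%:Z + 1 /\
        `|Y - 1| < (absz ((absz (l i))%:Z - (absz (l' j))%:Z))%:Z + 1,
      odd m -> forall i, (i < n./2)%N -> `|Y - 1| < (absz (l i))%:Z + 1,
      odd n -> forall j, (j < m./2)%N -> `|Y - 1| < (absz (l' j))%:Z + 1 &
      odd n -> odd m -> S].
  have PTT : forall i j, (i < n./2)%N -> (j < m./2)%N ->
      (2 %| Y + (absz (l i))%:Z + (absz (l' j))%:Z)%Z.
    move=> i j hi hj; have := pl i _; have := pl' j _; lia.
  have PTO : forall i, odd m -> (i < n./2)%N -> (2 %| Y + (absz (l i))%:Z)%Z.
    move=> i om hi; have := pl i _; have := pl' m./2 _; have := mid' om; lia.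
  have POT : forall j, odd n -> (j < m./2)%N -> (2 %| Y + (absz (l' j))%:Z)%Z.
    move=> j on hj; have := pl' j _; have := pl n./2 _; have := mid on; lia.
  rewrite critical_all /tau all_Wtens; split.
  - move/all_piW => [HA HB]; split.
    + move=> i j hi hj; have /all_piW [HA1 _] := HA i hi.
      by have := HA1 j hj; rewrite (goodTT h0 (PTT i j hi hj)) => /andP.
    + move=> om i hi; have /all_piW [_ HA2] := HA i hi.
      by have := HA2 om; rewrite (goodTO _ h0 (PTO i om hi)).
    + move=> on j hj; have /all_piW [HB1 _] := HB on.
      by have := HB1 j hj; rewrite (goodOT _ h0 (POT j on hj)).
    + move=> on om; have /all_piW [_ HB2] := HB on.
      by have := HB2 om; rewrite (goodOO _ _ h0).
  - move=> [F1 F2 F3 F4]; apply/all_piW; split.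
    + move=> i hi; apply/all_piW; split.
      * move=> j hj; rewrite (goodTT h0 (PTT i j hi hj)); apply/andP; exact: F1.
      * move=> om; rewrite (goodTO _ h0 (PTO i om hi)); exact: F2.
    + move=> on; apply/all_piW; split.
      * move=> j hj; rewrite (goodOT _ h0 (POT j on hj)); exact: F3.
      * move=> om; rewrite (goodOO _ _ h0); exact: F4.
apply: (iff_trans CE).
rewrite (@R1 Y w w' L0 t tY).
have hYe : odd n -> odd m -> (2 %| Y)%Z.
  move=> on om; exact: (Par on om (pl n./2 (half_ltn n0)) (pl' m./2 (half_ltn m0)) (mid on) (mid' om) hY).
have he : (e <= 1)%N by rewrite /e; case: (delta (+) delta').
split.
- move=> [F1 F2 F3 F4]; split.
  + rewrite hL0e.
    move: hadm0; rewrite /adm_pair => /and3P [hi0 hj0 hnm].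
    have [[i' hi' ei]|[on [ei li]]] := L0_mirror hl hi0;
    have [[j' hj' ej]|[om [ej lj]]] := L0_mirror hl' hj0.
    * exact: (A1 ei ej (proj2 (F1 i' j' hi' hj'))).
    * exact: (A2 ei lj (F2 om i' hi')).
    * exact: (A3 li ej (F3 on j' hj')).
    * by move: hnm; rewrite on om ei ej !eqxx.
  + move=> /andP [on om] /=. apply/(R2 tY (hYe on om) he). exact: F4.
- move=> [hQ hE].
  have Hadm : forall i j, adm_pair n m i j -> `|Y - 1| < (absz (l i - l' j))%:Z + 1.
    by move=> i j /hLmin h; apply: B4 h hQ.
  split.
  + move=> i j hi hj.
    exact: (B1 (L0_pos hl hi) (L0_pos hl' hj) (Hadm i j (Adm1 hi hj))).
  + move=> om i hi.
    exact: (B2 (mid' om) (Hadm _ _ (Adm2 om hi))).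
  + move=> on j hj.
    exact: (B3 (mid on) (Hadm _ _ (Adm3 on hj))).
  + move=> on om. apply/(R2 tY (hYe on om) he). by apply: hE; rewrite on om.
Qed.
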